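(* Let $r, J, L \ge 1$ be integers. Let $\mathbf{H}(X) = [h_{j,l}(X)]_{j \in [J], l \in [L]}$ be a $J \times L$ matrix whose entries are elements of $\mathbb{F}_2[X]/\langle X^r - 1\rangle$, each of which is either $0$, a monomial $X^{a}$, or a binomial $X^{a} + X^{b}$ with $a \not\equiv b \pmod r$. Let $H$ be the associated $Jr \times Lr$ binary parity-check matrix, and assume $H$ has constant column weight and constant row weight. For each $j,l$ let $E_{j,l} \subseteq \mathbb{Z}_r$ be the set of exponents occurring in $h_{j,l}(X)$. For $i, j \in [J]$ let $\mathbf{d}_{ij}$ be the multiset $\{(e - e') \bmod r : l \in [L],\ e \in E_{i,l},\ e' \in E_{j,l}\}$, where, when $i = j$, the pairs with $e = e'$ are excluded. Then the code $C(H)$ has girth $g \ge 6$ if and only if $\mathbf{d}_{ij}$ is multiplicity free for all $i, j \in [J]$.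
   Context: The binary matrix $H$ associated with $\mathbf{H}(X)$ is obtained by replacing each entry $h_{j,l}(X) = \sum_{s=0}^{r-1} c_s X^s$ by the $r\times r$ binary circulant matrix with first row $(c_0,\ldots,c_{r-1})$ (each subsequent row being the cyclic right shift by one of the previous row). $C(H)$ is the null space of $H$. A cycle of length $2s$ in $H$ is an ordered list of $2s$ positions of $H$ such that all these entries equal $1$, consecutive positions alternately share a row (with different columns) or share a column (with different rows), and all $2s$ positions are distinct except that the first and last coincide; the girth of the code is the length of a shortest cycle (infinite if there is none). A multiset is multiplicity free if no element occurs more than once. $[J]=\{1,\ldots,J\}$. *)

(* Defs.v *)
From mathcomp Require Import all_boot.
Set Implicit Arguments. Unset Strict Implicit. Unset Printing Implicit Defensive.

Section QC.
Variables (r J L : nat).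

(* A J x L polynomial matrix over F_2[X]/<X^r - 1>: entry (j,l) is
   h_{j,l}(X) = \sum_{s<r} c j l s X^s, coefficients in F_2 = bool. *)
Definition polymx := 'I_J -> 'I_L -> {ffun 'I_r -> bool}.

(* rows of H indexed by (j, s) (row j*r + s), columns by (l, t) (column l*r+t) *)
Definition rowT := ('I_J * 'I_r)%type.
Definition colT := ('I_L * 'I_r)%type.
Definition posT := (rowT * colT)%type.

(* Circulant expansion: entry (s,t) of the circulant with first row
   (c_0,...,c_{r-1}) is c_{(t - s) mod r}. *)
Definition Hentry (c : polymx) (x : rowT) (y : colT) : bool :=
  [exists k : 'I_r, c x.1 y.1 k && (val k == (val y.2 + r - val x.2) %% r)].

Definition Eset (c : polymx) (j : 'I_J) (l : 'I_L) : {set 'I_r} :=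
  [set k | c j l k].

Definition same_row (p q : posT) := (p.1 == q.1) && (p.2 != q.2).
Definition same_col (p q : posT) := (p.2 == q.2) && (p.1 != q.1).

Definition is_cycle (c : polymx) (p : seq posT) : Prop :=
  let n := size p in
  [/\ 0 < n, ~~ odd n, uniq p,
      all (fun q => Hentry c q.1 q.2) p &
        (forall (p0 : posT) i, i < n ->
           (if odd i then same_col else same_row)
             (nth p0 p i) (nth p0 p (i.+1 %% n)))
        \/
        (forall (p0 : posT) i, i < n ->
           (if odd i then same_row else same_col)
             (nth p0 p i) (nth p0 p (i.+1 %% n)))].

(* girth >= g : every cycle has length at least g (girth infinite if no cycle) *)
Definition girth_ge (c : polymx) (g : nat) : Prop :=
  forall p : seq posT, is_cycle c p -> g <= size p.

Definition const_col_weight (c : polymx) : Prop :=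
  exists w, forall y : colT, #|[set x : rowT | Hentry c x y]| = w.
Definition const_row_weight (c : polymx) : Prop :=
  exists w, forall x : rowT, #|[set y : colT | Hentry c x y]| = w.

Definition dmult (c : polymx) (i j : 'I_J) : seq nat :=
  flatten [seq flatten [seq [seq (val e + r - val e') %% r
                                | e' <- enum (Eset c j l)
                                & (i != j) || (e != e')]
                            | e <- enum (Eset c i l)]
          | l <- enum 'I_L].

End QC.

(* Main.v *)
Require Import Defs.
From mathcomp Require Import all_boot zify.
Set Implicit Arguments. Unset Strict Implicit. Unset Printing Implicit Defensive.

Lemma modM' r a b : a < r -> b < r ->
  (b <= a /\ (a + r - b) %% r = a - b) \/ (a < b /\ (a + r - b) %% r = a + r - b).
Proof.
move=> ar br; case: (leqP b a) => h.
  left; split => //; have -> : a + r - b = (a - b) + r by lia.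
  by rewrite modnDr modn_small //; lia.
right; split => //; rewrite modn_small //; lia.
Qed.

Lemma F1 r a b t : a < r -> b < r -> t < r -> (t + r - a) %% r = (t + r - b) %% r -> a = b.
Proof.
move=> ha hb ht.
case: (modM' ht ha) => [[h1 ->]|[h1 ->]]; case: (modM' ht hb) => [[h2 ->]|[h2 ->]]; lia.
Qed.

Lemma F1' r a b t : a < r -> b < r -> t < r -> (a + r - t) %% r = (b + r - t) %% r -> a = b.
Proof.
move=> ha hb ht.
case: (modM' ha ht) => [[h1 ->]|[h1 ->]]; case: (modM' hb ht) => [[h2 ->]|[h2 ->]]; lia.
Qed.

Lemma F2 r s s' t : s < r -> s' < r -> t < r ->
  ((t + r - s) %% r + r - (t + r - s') %% r) %% r = (s' + r - s) %% r.
Proof.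
move=> hs hs' ht.
have p0 : 0 < r by lia.
have l1 := ltn_pmod (t + r - s) p0; have l2 := ltn_pmod (t + r - s') p0.
case: (modM' l1 l2) => [[h0 ->]|[h0 ->]];
case: (modM' ht hs) => [[h1 E1]|[h1 E1]]; case: (modM' ht hs') => [[h2 E2]|[h2 E2]];
rewrite E1 E2 in h0 *; case: (modM' hs' hs) => [[h3 ->]|[h3 ->]]; lia.
Qed.

Lemma F3 r e e' : e < r -> e' < r -> (e + r - (e + r - e') %% r) %% r = e'.
Proof.
move=> he he'.
have p0 : 0 < r by lia.
have l1 := ltn_pmod (e + r - e') p0.
case: (modM' he l1) => [[h0 ->]|[h0 ->]];
case: (modM' he he') => [[h1 E1]|[h1 E1]]; rewrite E1 in h0 *; lia.
Qed.

Lemma F0 r e : e < r -> (e + r - 0) %% r = e.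
Proof. move=> he; rewrite subn0 modnDr modn_small //. Qed.

Lemma F4 r e e' : e < r -> e' < r -> (e + r - e') %% r = 0 -> e = e'.
Proof. move=> he he'; case: (modM' he he') => [[h0 ->]|[h0 ->]]; lia. Qed.

Lemma uniq_flatten_map (A B : eqType) (s : seq A) (F : A -> seq B) (key : B -> A) :
  uniq s -> (forall x, x \in s -> uniq (F x)) -> (forall x y, y \in F x -> key y = x) ->
  uniq (flatten (map F s)).
Proof.
elim: s => [|x s IH] //= /andP[xs us] hF hk.
rewrite cat_uniq hF ?mem_head //= IH // ?andbT; last by move=> z zs; apply: hF; rewrite inE zs orbT.
apply/hasPn => y /flatten_mapP [z zs yz]; apply/negP => yx.
by move: xs; rewrite -(hk _ _ yx) (hk _ _ yz) zs.
Qed.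

Section S.
Variables (r J L : nat) (c : polymx r J L).

Definition Tset (i j : 'I_J) : seq ('I_L * 'I_r * 'I_r) :=
 flatten [seq flatten [seq [seq (l, e, e') | e' <- enum (Eset c j l) & (i != j) || (e != e')]
                       | e <- enum (Eset c i l)] | l <- enum 'I_L].

Definition gT (t : 'I_L * 'I_r * 'I_r) := (val t.1.2 + r - val t.2) %% r.

Lemma dmultE i j : dmult c i j = map gT (Tset i j).
Proof.
rewrite /dmult /Tset [RHS]map_flatten -(map_comp (map gT)); congr flatten; apply: eq_map => l /=.
rewrite [RHS]map_flatten -(map_comp (map gT)); congr flatten; apply: eq_map => e /=.
by rewrite -map_comp.
Qed.

Lemma memT i j t : (t \in Tset i j) =
  [&& c i t.1.1 t.1.2, c j t.1.1 t.2 & (i != j) || (t.1.2 != t.2)].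
Proof.
case: t => [[l e] e'] /=.
apply/idP/idP.
  case/flatten_mapP => l0 _ /flatten_mapP [e0 he0] /mapP [e1 he1 [-> -> ->]].
  move: he0 he1; rewrite mem_filter !mem_enum !inE => -> /andP[-> ->] //.
case/and3P => h1 h2 h3; apply/flatten_mapP; exists l; first by rewrite mem_enum.
apply/flatten_mapP; exists e; first by rewrite mem_enum inE.
by apply/mapP; exists e' => //; rewrite mem_filter h3 mem_enum inE.
Qed.

Lemma uniqT i j : uniq (Tset i j).
Proof.
apply: (@uniq_flatten_map _ _ _ _ (fun t => t.1.1)); first exact: enum_uniq.
  move=> l _; apply: (@uniq_flatten_map _ _ _ _ (fun t => t.1.2)); first exact: enum_uniq.
    move=> e _; rewrite map_inj_uniq; [apply: filter_uniq; exact: enum_uniq| by move=> a b []].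
  by move=> e y /mapP [e' _ ->].
by move=> l y /flatten_mapP [e _ /mapP [e' _ ->]].
Qed.

Hypothesis rpos : 0 < r.
Definition md (a b : nat) : 'I_r := Ordinal (ltn_pmod (a + r - b) rpos).

Lemma HentryE x y : Hentry c x y = c x.1 y.1 (md y.2 x.2).
Proof.
apply/existsP/idP => [[k /andP[ck /eqP kv]]|h].
  by have <- : k = md y.2 x.2 by apply: val_inj.
by exists (md y.2 x.2); rewrite h eqxx.
Qed.
End S.

Lemma uniq_map_inj (A B : eqType) (f : A -> B) s x y :
  uniq (map f s) -> x \in s -> y \in s -> f x = f y -> x = y.
Proof.
elim: s => [|z s IH] //= /andP[nz us]; rewrite !inE.
case/orP => [/eqP->|xs]; case/orP => [/eqP->|ys] // e.
- by move: nz; rewrite e map_f.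
- by move: nz; rewrite -e map_f.
- exact: IH.
Qed.

Section S.
Variables (r J L : nat) (c : polymx r J L).
Hypothesis rpos : 0 < r.

Definition rect := exists (x1 x2 : rowT r J) (y1 y2 : colT r L),
  [/\ x1 != x2, y1 != y2, Hentry c x1 y1, Hentry c x1 y2 & Hentry c x2 y1 /\ Hentry c x2 y2].

Lemma rect_dup : rect -> exists i j, ~~ uniq (dmult c i j).
Proof.
move=> [[i s] [[j s'] [[l t] [[l' t'] [nx ny h11 h12 [h21 h22]]]]]].
rewrite !(HentryE _ rpos) /= in h11 h12 h21 h22.
exists i, j; rewrite dmultE.
have hs := ltn_ord s; have hs' := ltn_ord s'; have ht := ltn_ord t; have ht' := ltn_ord t'.
have m1 : (l, md rpos t s, md rpos t s') \in Tset c i j.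
  rewrite memT /= h11 h21 /=; case: eqVneq => //= eij; subst j.
  apply/negP => /eqP/(congr1 val) /= /F1 e; move: nx.
  by rewrite (_ : s = s') ?eqxx //; apply: val_inj; exact: e.
have m2 : (l', md rpos t' s, md rpos t' s') \in Tset c i j.
  rewrite memT /= h12 h22 /=; case: eqVneq => //= eij; subst j.
  apply/negP => /eqP/(congr1 val) /= /F1 e; move: nx.
  by rewrite (_ : s = s') ?eqxx //; apply: val_inj; exact: e.
apply/negP => u.
have := uniq_map_inj u m1 m2; rewrite /gT /= !F2 // => /(_ erefl) [el e1 _].
have e := F1' ht ht' hs e1.
move: ny; rewrite el (_ : t = t') ?eqxx //; apply: val_inj; exact: e.
Qed.

Lemma dup_rect i j : ~~ uniq (dmult c i j) -> rect.
Proof.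
rewrite dmultE => nu.
have : ~~ all (fun t1 => all (fun t2 => (gT t1 == gT t2) ==> (t1 == t2)) (Tset c i j)) (Tset c i j).
  apply/negP => /allP Hall; move/negP: nu; apply; rewrite map_inj_in_uniq ?uniqT //.
  by move=> a b ha hb e; have := allP (Hall a ha) b hb; rewrite e eqxx => /eqP.
case/allPn => [[[l e] e'] m1 /allPn [[[l' f] f'] m2]]; rewrite negb_imply => /andP[/eqP eg ne].
rewrite !memT /= in m1 m2; case/and3P: m1 => c1 c2 c3; case/and3P: m2 => c4 c5 c6.
rewrite /gT /= in eg.
have he := ltn_ord e; have he' := ltn_ord e'; have hf := ltn_ord f; have hf' := ltn_ord f'.
pose z : 'I_r := Ordinal rpos.
exists (i, z), (j, md rpos e e'), (l, e), (l', f); split.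
- apply/negP => /eqP [eij e0]; have ee := F4 he he' (esym e0); subst j.
  by move: c3; rewrite eqxx /= (_ : e = e') ?eqxx //; apply: val_inj; exact: ee.
- apply/negP => /eqP [ell eef]; subst l' f.
  have ee := F1 he' hf' he eg; move: ne; rewrite (_ : e' = f') ?eqxx //; apply: val_inj; exact: ee.
- by rewrite (HentryE _ rpos) /= (_ : md rpos e z = e) //; apply: val_inj; rewrite /= F0.
- by rewrite (HentryE _ rpos) /= (_ : md rpos f z = f) //; apply: val_inj; rewrite /= F0.
- split.
  + by rewrite (HentryE _ rpos) /= (_ : md rpos e (md rpos e e') = e') //; apply: val_inj; rewrite /= F3.
  + by rewrite (HentryE _ rpos) /= (_ : md rpos f (md rpos e e') = f') //; apply: val_inj; rewrite /= eg F3.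
Qed.

Lemma rect_cycle : rect -> exists p, is_cycle c p /\ size p = 4.
Proof.
move=> [x1 [x2 [y1 [y2 [nx ny h11 h12 [h21 h22]]]]]].
exists [:: (x1, y1); (x1, y2); (x2, y2); (x2, y1)]; split => //; split => //.
- by rewrite /= !inE !xpair_eqE !eqxx (eq_sym y2 y1) (negbTE nx) (negbTE ny).
- by rewrite /=; repeat (apply/andP; split).
- left => p0 k; do 4?[case: k => [|k]] => //= _;
  by rewrite /same_row /same_col /= eqxx ?ny ?nx // eq_sym ?ny ?nx.
Qed.

Lemma cycle_small p : is_cycle c p -> size p < 6 -> rect.
Proof.
case: p => [|a [|b [|c' [|d [|e [|f p]]]]]] //= [_ //= _ up al [H|H]] _.
- have := H a 0 erefl; have := H a 1 erefl; rewrite /same_row /same_col /=.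
  by move=> /andP[_ n] /andP[/eqP e _]; rewrite e eqxx in n.
- have := H a 0 erefl; have := H a 1 erefl; rewrite /same_row /same_col /=.
  by move=> /andP[/eqP e _] /andP[_ n]; rewrite e eqxx in n.
- have h0 := H a 0 erefl; have h1 := H a 1 erefl; have h2 := H a 2 erefl; have h3 := H a 3 erefl.
  clear H; move: h0 h1 h2 h3; rewrite /same_row /same_col /=.
  case: a b c' d al up => [a1 a2] [b1 b2] [c1 c2] [d1 d2] /= al up.
  move=> /andP[/eqP e1 n1] /andP[/eqP e2 n2] /andP[/eqP e3 n3] /andP[/eqP e4 n4].
  subst; case/and5P: al => q1 q2 q3 q4 _.
  by exists b1, d1, a2, c2; split.
- have h0 := H a 0 erefl; have h1 := H a 1 erefl; have h2 := H a 2 erefl; have h3 := H a 3 erefl.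
  clear H; move: h0 h1 h2 h3; rewrite /same_row /same_col /=.
  case: a b c' d al up => [a1 a2] [b1 b2] [c1 c2] [d1 d2] /= al up.
  move=> /andP[/eqP e1 n1] /andP[/eqP e2 n2] /andP[/eqP e3 n3] /andP[/eqP e4 n4].
  subst; case/and5P: al => q1 q2 q3 q4 _.
  by exists a1, c1, b2, d2; split.
Qed.
End S.

Theorem theorem11 (r J L : nat) (c : polymx r J L) :
  0 < r -> 0 < J -> 0 < L ->
  (forall (j : 'I_J) (l : 'I_L), #|Eset c j l| <= 2) ->
  const_col_weight c -> const_row_weight c ->
  (girth_ge c 6 <-> forall i j : 'I_J, uniq (dmult c i j)).
Proof.
move=> rpos _ _ _ _ _; split.
  move=> g i j; apply/negPn/negP => nu.
  have [p [cp sp]] := rect_cycle (dup_rect rpos nu).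
  by have := g p cp; rewrite sp.
move=> U p cp; rewrite leqNgt; apply/negP => sm.
have [i [j]] := rect_dup rpos (cycle_small cp sm).
by rewrite U.
Qed.
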